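(* Let $X_t\subset X_{t+p}$ be finite simplicial complexes with oriented simplices (orientations on $X_t$ inherited), whose vertices $v_i$ carry nonzero real labels $q_i$, and let $F$ be a nowhere-zero real function on the simplices of $X_{t+p}$. Let $\mathscr{S}_{t+p}$ be the labeled sheaf on $X_{t+p}$ determined by $(q_i)$ and $F$, and $\mathscr{S}_t$ its pullback (equivalently, the labeled sheaf on $X_t$ determined by the same data). Let $c$ be a nonzero real number, and let $\mathscr{S}'_{t+p},\mathscr{S}'_t$ be the sheaves obtained in the same way after replacing every label $q_i$ by $c\,q_i$. Then the spectrum of every persistent sheaf Laplacian $\Delta_q^{t,p}$ for the primed sheaves is obtained from that of the unprimed sheaves by multiplying every eigenvalue by $c^2$.
   Context: Labeled sheaf: every stalk is $\mathbb{R}$ (standard inner product, distinct stalks orthogonal), and for a face relation $\sigma=[v_0,\dots,v_n]\leqslant\tau=[v_0,\dots,v_n,v_{n+1},\dots,v_m]$ the restriction map is multiplication by $F(\sigma)\,q_{n+1}\cdots q_m/F(\tau)$ (product of labels of the vertices of $\tau$ not in $\sigma$). The pullback to $X_t$ has the same stalks and restriction maps on $X_t$. $C^q(X;\mathscr{S})=\bigoplus_{\dim\sigma=q}\mathscr{S}(\sigma)$, and $C^q(X_t;\mathscr{S}_t)$ is the subspace of $C^q(X_{t+p};\mathscr{S}_{t+p})$ spanned by stalks over simplices of $X_t$. Signed incidence: for $\tau=[v_0,\dots,v_n]$, $\sigma=[v_0,\dots,\hat v_i,\dots,v_n]$, $[\sigma:\tau]=(-1)^i$ (or $(-1)^{i+1}$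 if $\sigma$ oppositely oriented), $0$ if not a codimension-one face. Coboundary $d_q|_{\mathscr{S}(\sigma)}=\sum_{\sigma\leqslant\tau}[\sigma:\tau]\mathscr{S}_{\sigma\leqslant\tau}$; $d^t,d^{t+p}$ denote those of the two complexes. With $\mathbb{C}^{t,p}_{q+1}=\{e\in C^{q+1}(X_{t+p};\mathscr{S}_{t+p}) : (d_q^{t+p})^*(e)\in C^q(X_t;\mathscr{S}_t)\}$ and $\eth_q^{t,p}$ the adjoint of $(d_q^{t+p})^*|_{\mathbb{C}^{t,p}_{q+1}}$, the persistent sheaf Laplacian is $\Delta_q^{t,p}=(\eth_q^{t,p})^*\eth_q^{t,p}+d_{q-1}^t(d_{q-1}^t)^*$ on $C^q(X_t;\mathscr{S}_t)$. *)

(* Defs.v *)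
From HB Require Import structures.
From mathcomp Require Import all_boot all_order all_algebra.
Set Implicit Arguments. Unset Strict Implicit. Unset Printing Implicit Defensive.
Import Order.TTheory GRing.Theory Num.Theory.
Local Open Scope ring_scope.

(* Vertices are 'I_N (ordered by their natural order); a simplex is a set of
   vertices; a q-simplex has q.+1 vertices. *)
Definition simplex N := {set 'I_N}.

Definition is_complex N (X : {set simplex N}) : Prop :=
  (forall s, s \in X -> s != set0) /\
  (forall s t, s \in X -> t != set0 -> t \subset s -> t \in X).

(* Orientation: [o s = false] means s is oriented by the increasing order of
   its vertices, [o s = true] means the opposite orientation. *)

Section Sheaf.
Variables (R : realFieldType) (N : nat).
Implicit Types (X : {set simplex N}) (s sigma tau : simplex N).

(* Signed incidence [sigma : tau] for the orientation o: if tau = sigma plus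
   one vertex v, and v is at position i in tau (sorted), then
   (-1)^i, corrected by the orientation signs of sigma and tau; 0 otherwise. *)
Definition incidence (o : simplex N -> bool) sigma tau : R :=
  if (sigma \subset tau) && (#|tau| == #|sigma|.+1) then
    (-1) ^+ o sigma * (-1) ^+ o tau *
    \sum_(v in tau :\: sigma) (-1) ^+ #|[set u in tau | (u < v)%N]|
  else 0.

Definition restr (lab : 'I_N -> R) (F : simplex N -> R) sigma tau : R :=
  F sigma * (\prod_(v in tau :\: sigma) lab v) / F tau.

(* Cochains: real functions on all vertex sets; C^q(X) are those supported on
   the q-simplices of X (all stalks are R, orthonormal). *)
Definition cochain := simplex N -> R.

Definition inC X (q : nat) (f : cochain) : Prop :=
  forall s, f s != 0 -> s \in X /\ #|s| = q.+1.

Definition dot (f g : cochain) : R := \sum_s f s * g s.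

Definition cobound o lab F X (q : nat) (f : cochain) : cochain :=
  fun tau => if (tau \in X) && (#|tau| == q.+2) then
    \sum_(sigma in X | #|sigma| == q.+1)
       incidence o sigma tau * restr lab F sigma tau * f sigma
  else 0.

Definition cobound_adj o lab F X (q : nat) (f : cochain) : cochain :=
  fun sigma => if (sigma \in X) && (#|sigma| == q.+1) then
    \sum_(tau in X | #|tau| == q.+2)
       incidence o sigma tau * restr lab F sigma tau * f tau
  else 0.

Definition persC o lab F Xt Xtp (q : nat) (e : cochain) : Prop :=
  inC Xtp q.+1 e /\ inC Xt q (cobound_adj o lab F Xtp q e).

(* eth is (on C^q(X_t)) the adjoint of (d_q^{t+p})^* restricted to
   C^{t,p}_{q+1}, i.e. eth : C^q(X_t) -> C^{t,p}_{q+1} with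
   <eth x, e> = <x, (d_q^{t+p})^* e> for all e in C^{t,p}_{q+1}. *)
Definition is_eth o lab F Xt Xtp (q : nat) (eth : cochain -> cochain) : Prop :=
  forall x, inC Xt q x ->
    persC o lab F Xt Xtp q (eth x) /\
    forall e, persC o lab F Xt Xtp q e ->
      dot (eth x) e = dot x (cobound_adj o lab F Xtp q e).

(* Persistent sheaf Laplacian
   Delta_q^{t,p} = eth^* eth + d_{q-1}^t (d_{q-1}^t)^*  on C^q(X_t),
   where eth^* = (d_q^{t+p})^* restricted to C^{t,p}_{q+1}, and the second
   term is 0 when q = 0. *)
Definition pers_lap o lab F Xt Xtp (q : nat) (eth : cochain -> cochain)
  (x : cochain) : cochain :=
  fun s => cobound_adj o lab F Xtp q (eth x) s +
    (if q is q'.+1 then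
       cobound o lab F Xt q' (cobound_adj o lab F Xt q' x) s
     else 0).

Definition qsimp X (q : nat) : {set simplex N} := [set s in X | #|s| == q.+1].

Definition basis_vec (sigma : simplex N) : cochain := fun s => (s == sigma)%:R.

Definition pers_lap_mx o lab F Xt Xtp (q : nat) (eth : cochain -> cochain)
  : 'M[R]_#|qsimp Xt q| :=
  \matrix_(i, j) pers_lap o lab F Xt Xtp q eth
                   (basis_vec (enum_val j)) (enum_val i).

End Sheaf.

(* Main.v *)
Require Import Defs.
From HB Require Import structures.
From mathcomp Require Import all_boot all_order all_algebra.
From mathcomp Require Import ring.
Import Order.TTheory GRing.Theory Num.Theory.
Local Open Scope ring_scope.
Section Poly.
Variable R : fieldType.

Lemma char_polyZ n (A : 'M[R]_n) (a : R) : a != 0 ->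
  char_poly (a *: A) = a ^+ n *: (char_poly A \Po (a^-1 *: 'X)).
Proof.
move=> a0; rewrite /char_poly.
have -> : char_poly_mx (a *: A) =
   a%:P *: map_mx (comp_poly (a^-1 *: 'X)) (char_poly_mx A).
  apply/matrixP => i j; rewrite !mxE.
  case: (i == j) => /=.
  - rewrite mulr1n comp_polyB comp_polyX comp_polyC mulrBr -polyCM.
    by rewrite -mul_polyC mulrA -polyCM mulfV // mul1r.
  - by rewrite mulr0n !sub0r raddfN /= comp_polyC mulrN -polyCM.
rewrite detZ det_map_mx /=.
by rewrite -rmorphXn mul_polyC.
Qed.

Lemma dvd_comp (p : {poly R}) (a l : R) k : a != 0 ->
  ('X - l%:P) ^+ k %| p -> ('X - (a * l)%:P) ^+ k %| p \Po (a^-1 *: 'X).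
Proof.
move=> a0 /(dvdp_comp_poly (a^-1 *: 'X)).
rewrite rmorphXn /= comp_polyB comp_polyX comp_polyC.
have -> : a^-1 *: 'X - l%:P = a^-1 *: ('X - (a * l)%:P).
  by rewrite scalerBr; congr (_ - _); rewrite -mul_polyC -polyCM mulKf.
by rewrite exprZn dvdpZl // expf_neq0 // invr_eq0.
Qed.

Lemma mup_comp (p : {poly R}) (a l : R) : a != 0 -> p != 0 ->
  mup (a * l) (p \Po (a^-1 *: 'X)) = mup l p.
Proof.
move=> a0 p0.
have r2 : size (a^-1 *: 'X : {poly R}) = 2%N.
  by rewrite size_scale ?size_polyX // invr_eq0.
have q0 : p \Po (a^-1 *: 'X) != 0 by rewrite comp_poly2_eq0.
apply/eqP; rewrite eqn_leq; apply/andP; split.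
- have H : ('X - (a * l)%:P) ^+ mup (a * l) (p \Po (a^-1 *: 'X)) %| p \Po (a^-1 *: 'X).
    by rewrite -mup_geq.
  have := @dvd_comp _ (a^-1) (a * l) _ (invr_neq0 a0) H.
  rewrite invrK mulKf // -comp_polyA comp_polyZ comp_polyX scalerA mulVf // scale1r.
  by rewrite comp_polyXr -mup_geq.
- rewrite mup_geq //; apply: dvd_comp => //; rewrite -mup_geq //.
Qed.
End Poly.
Local Open Scope ring_scope.

Section Sh.
Variables (R : realFieldType) (N : nat) (o : simplex N -> bool)
  (lab : 'I_N -> R) (F : simplex N -> R) (c : R).
Let lab' := fun v => c * lab v.

Lemma inc_restr s t :
  incidence R o s t * restr lab' F s t = c * (incidence R o s t * restr lab F s t).
Proof.
rewrite /incidence /restr; case: ifP => [/andP [sub /eqP card]|_]; last first.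
  by rewrite !mul0r mulr0.
have : #|t :\: s| == 1%N.
  by rewrite cardsD (setIidPr sub) card subSnn.
case/cards1P => v ->; rewrite !big_set1 /lab'.
ring.
Qed.

Lemma adjZ X q f s :
  cobound_adj o lab' F X q f s = c * cobound_adj o lab F X q f s.
Proof.
rewrite /cobound_adj; case: ifP => _; last by rewrite mulr0.
by rewrite mulr_sumr; apply: eq_bigr => t _; rewrite inc_restr -mulrA.
Qed.

Lemma cobZ X q f s :
  cobound o lab' F X q f s = c * cobound o lab F X q f s.
Proof.
rewrite /cobound; case: ifP => _; last by rewrite mulr0.
by rewrite mulr_sumr; apply: eq_bigr => t _; rewrite inc_restr -mulrA.
Qed.
End Sh.

Section Lin.
Variables (R : realFieldType) (N : nat) (o : simplex N -> bool)
  (lab : 'I_N -> R) (F : simplex N -> R).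

Lemma adj_lin X q (f g : cochain R N) k s :
  cobound_adj o lab F X q (fun s => f s - k * g s) s =
  cobound_adj o lab F X q f s - k * cobound_adj o lab F X q g s.
Proof.
rewrite /cobound_adj; case: ifP => _; last by rewrite mulr0 subr0.
rewrite mulr_sumr -sumrB; apply: eq_bigr => t _.
ring.
Qed.

Lemma adj_ext X q (f g : cochain R N) s : f =1 g ->
  cobound_adj o lab F X q f s = cobound_adj o lab F X q g s.
Proof. by move=> e; rewrite /cobound_adj; case: ifP => //= _; apply: eq_bigr => t _; rewrite e. Qed.

Lemma cob_ext X q (f g : cochain R N) s : f =1 g ->
  cobound o lab F X q f s = cobound o lab F X q g s.
Proof. by move=> e; rewrite /cobound; case: ifP => //= _; apply: eq_bigr => t _; rewrite e. Qed.

Lemma adj_scale X q (f : cochain R N) k s :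
  cobound_adj o lab F X q (fun s => k * f s) s = k * cobound_adj o lab F X q f s.
Proof.
rewrite /cobound_adj; case: ifP => _; last by rewrite mulr0.
by rewrite mulr_sumr; apply: eq_bigr => t _; rewrite mulrCA.
Qed.

Lemma cob_scale X q (f : cochain R N) k s :
  cobound o lab F X q (fun s => k * f s) s = k * cobound o lab F X q f s.
Proof.
rewrite /cobound; case: ifP => _; last by rewrite mulr0.
by rewrite mulr_sumr; apply: eq_bigr => t _; rewrite mulrCA.
Qed.

Lemma inC_lin X q (f g : cochain R N) k :
  inC X q f -> inC X q g -> inC X q (fun s => f s - k * g s).
Proof.
move=> hf hg s ne.
case: (eqVneq (f s) 0) => [f0|]; last by move/hf.
case: (eqVneq (g s) 0) => [g0|]; last by move/hg.
by move: ne; rewrite f0 g0 mulr0 subrr eqxx.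
Qed.

Lemma inC_scale X q (f g : cochain R N) k :
  (forall s, f s = k * g s) -> inC X q g -> inC X q f.
Proof.
move=> e hg s; rewrite e mulf_eq0 negb_or => /andP [_]; exact: hg.
Qed.

Lemma dot_lin (f g h : cochain R N) k :
  dot (fun s => f s - k * g s) h = dot f h - k * dot g h.
Proof.
by rewrite /dot mulr_sumr -sumrB; apply: eq_bigr => t _; rewrite mulrBl mulrA.
Qed.

Lemma dot_scale (f h h' : cochain R N) k :
  (forall s, h' s = k * h s) -> dot f h' = k * dot f h.
Proof.
by move=> e; rewrite /dot mulr_sumr; apply: eq_bigr => t _; rewrite e mulrCA.
Qed.

Lemma dot_self0 (d : cochain R N) : dot d d = 0 -> forall s, d s = 0.
Proof.
move=> /eqP; rewrite /dot psumr_eq0 => [/allP H s|s _]; last exact: sqr_ge0.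
by have := H s (mem_index_enum s); rewrite mulf_eq0 orbb => /eqP.
Qed.
End Lin.

Section Main.
Variables (R : realFieldType) (N : nat) (o : simplex N -> bool)
  (lab : 'I_N -> R) (F : simplex N -> R) (c : R) (Xt Xtp : {set simplex N}) (q : nat).
Hypothesis c0 : c != 0.

Lemma persC_eq e : persC o (fun v => c * lab v) F Xt Xtp q e <-> persC o lab F Xt Xtp q e.
Proof.
split=> [[h1 h2]|[h1 h2]]; split=> //.
- apply: (@inC_scale _ _ _ _ _ _ c^-1) h2 => s; by rewrite adjZ mulKf.
- apply: (@inC_scale _ _ _ _ _ _ c) h2 => s; by rewrite adjZ.
Qed.

Lemma persC_lin lab0 (f g : cochain R N) k :
  persC o lab0 F Xt Xtp q f -> persC o lab0 F Xt Xtp q g ->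
  persC o lab0 F Xt Xtp q (fun s => f s - k * g s).
Proof.
move=> [f1 f2] [g1 g2]; split; first exact: inC_lin.
apply: (@inC_scale _ _ _ _ _ _ 1) (@inC_lin _ _ _ _ _ _ k f2 g2) => s.
by rewrite mul1r adj_lin.
Qed.

Lemma eth_scale eth eth' x :
  is_eth o lab F Xt Xtp q eth -> is_eth o (fun v => c * lab v) F Xt Xtp q eth' ->
  inC Xt q x -> forall s, eth' x s = c * eth x s.
Proof.
move=> E E' hx.
have [P H] := E x hx; have [P' H'] := E' x hx.
set d := fun s => eth' x s - c * eth x s.
have Pd : persC o lab F Xt Xtp q d.
  by apply: persC_lin => //; apply/persC_eq.
have Pd' : persC o (fun v => c * lab v) F Xt Xtp q d by apply/persC_eq.
have : dot d d = 0.
  rewrite {1}/d dot_lin H' // H // (@dot_scale _ _ x (cobound_adj o lab F Xtp q d) _ c).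
    by rewrite subrr.
  by move=> s; rewrite adjZ.
move/dot_self0 => D s; apply/eqP; rewrite -subr_eq0; apply/eqP; exact: D.
Qed.

Lemma lap_scale eth eth' x :
  is_eth o lab F Xt Xtp q eth -> is_eth o (fun v => c * lab v) F Xt Xtp q eth' ->
  inC Xt q x -> forall s,
  pers_lap o (fun v => c * lab v) F Xt Xtp q eth' x s =
  c ^+ 2 * pers_lap o lab F Xt Xtp q eth x s.
Proof.
move=> E E' hx s; rewrite /pers_lap mulrDr; congr (_ + _).
  rewrite adjZ (@adj_ext _ _ _ _ _ _ _ _ _ _ (@eth_scale eth eth' x E E' hx)) adj_scale.
  by rewrite mulrA expr2.
case: q E E' hx => [|q'] // E E' hx; first by rewrite mulr0.
rewrite cobZ (@cob_ext _ _ _ _ _ _ _ _ _ _ (@adjZ _ _ _ _ _ _ _ _ _)) cob_scale.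
by rewrite mulrA expr2.
Qed.
End Main.

Theorem mainTheorem5 (R : realFieldType) (N : nat)
  (Xt Xtp : {set simplex N}) (o : simplex N -> bool)
  (lab : 'I_N -> R) (F : simplex N -> R) (c : R) (q : nat)
  (eth eth' : cochain R N -> cochain R N) :
  is_complex Xt -> is_complex Xtp -> Xt \subset Xtp ->
  (forall v : 'I_N, [set v] \in Xtp -> lab v != 0) ->
  (forall s, s \in Xtp -> F s != 0) ->
  c != 0 ->
  is_eth o lab F Xt Xtp q eth ->
  is_eth o (fun v => c * lab v) F Xt Xtp q eth' ->
  forall lambda : R,
    mup (c ^+ 2 * lambda)
        (char_poly (pers_lap_mx o (fun v => c * lab v) F Xt Xtp q eth'))
    = mup lambda (char_poly (pers_lap_mx o lab F Xt Xtp q eth)).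
Proof.
move=> _ _ _ _ _ c0 E E' lambda.
have Hmx : pers_lap_mx o (fun v => c * lab v) F Xt Xtp q eth' =
    (c ^+ 2) *: pers_lap_mx o lab F Xt Xtp q eth.
  apply/matrixP => i j; rewrite !mxE; apply: lap_scale => //.
  have := enum_valP j; rewrite inE => /andP [h1 /eqP h2] s.
  rewrite /basis_vec; set b := (X in (nat_of_bool X)%:R); have Eb : b = (s == enum_val j) by []. clearbody b. case: b Eb => [h _|_]; last by rewrite eqxx. have -> : s = enum_val j by apply/eqP; exact: (esym h). by [].
have c2 : c ^+ 2 != 0 by rewrite expf_neq0.
rewrite Hmx char_polyZ // -mul_polyC mupMr; last by rewrite rootC expf_neq0.
apply: mup_comp => //; exact: monic_neq0 (char_poly_monic _).
Qed.
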